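(* Let $p$ be an odd prime, $n\ge1$, and let $f:V(K_n)\to\{1,\dots,n\}$ be any bijection on the vertex set of the complete graph $K_n$. Put $q=\lfloor n/p\rfloor$, $r=n-qp$, $\psi=\max\{0,2r-p+1\}$, $\delta_s=1$ if $s$ is even and $0$ otherwise, and $\mathcal S=\mathcal S_1+\mathcal S_2$ with $$\mathcal S_1=\sum_{\substack{s=2\\ s\ne p}}^{r+1}(s-1-\delta_s)(s/p),\qquad \mathcal S_2=\sum_{\substack{s=r+2\\ s\ne p}}^{2r}(2r-s+1-\delta_s)(s/p).$$ Then, with $e_{f_p^*}(i)$ the number of edges of $K_n$ with label $i$ under the induced edge labeling $f_p^*$, $$e_{f_p^*}(0)-e_{f_p^*}(1)=\tfrac12\left(2nq-pq^2-q+\psi\right)-\tfrac12\,\mathcal S .$$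
   Context: For an odd prime $p$ and an integer $a$ not divisible by $p$, $(a/p)$ denotes the Legendre symbol: $1$ if $a$ is a quadratic residue mod $p$, $-1$ otherwise. Empty sums equal $0$. Given a graph $G$ of order $n$ and a bijection $f:V(G)\to\{1,\dots,n\}$, the induced edge labeling $f_p^*:E(G)\to\{0,1\}$ is defined by $f_p^*(uv)=0$ if $p\mid f(u)+f(v)$ or $((f(u)+f(v))/p)=-1$, and $f_p^*(uv)=1$ if $((f(u)+f(v))/p)=1$; $e_{f_p^*}(i)$ is the number of edges with label $i$. *)

(* Defs.v *)
From mathcomp Require Import all_boot all_order all_algebra.
Set Implicit Arguments. Unset Strict Implicit. Unset Printing Implicit Defensive.
Import Order.TTheory GRing.Theory Num.Theory.

Definition quad_res (p a : nat) : bool :=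
  [exists x : 'I_p, (x * x) %% p == a %% p].

(* Legendre symbol (a/p) for odd prime p; value 0 when p | a (never used
   in the statement except through the labeling, which treats p | a apart). *)
Definition legendre (p a : nat) : int :=
  if p %| a then 0%R else if quad_res p a then 1%R else (-1)%R.

Definition Kn_edges (n : nat) : {set {set 'I_n}} :=
  [set e : {set 'I_n} | #|e| == 2].

Definition edge_label (p n : nat) (f : 'I_n -> nat) (e : {set 'I_n}) : nat :=
  let s := \sum_(v in e) f v in
  if p %| s then 0 else if legendre p s == 1%R then 1 else 0.

Definition num_edges_label (p n : nat) (f : 'I_n -> nat) (i : nat) : nat :=
  #|[set e in Kn_edges n | edge_label p f e == i]|.

Definition delta (s : nat) : int := if odd s then 0%R else 1%R.

(* Main.v *)
Require Import Defs.
From mathcomp Require Import all_boot all_order all_algebra.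
From mathcomp Require Import zify ring lra.
Set Implicit Arguments. Unset Strict Implicit. Unset Printing Implicit Defensive.
Import Order.TTheory GRing.Theory Num.Theory.

Lemma dvdn_modself p s : (p %| s %% p) = (p %| s).
Proof. by rewrite {2}(divn_eq s p) dvdn_addr ?dvdn_mull. Qed.

Lemma legendre_mod p s : legendre p (s %% p) = legendre p s.
Proof. by rewrite /legendre /quad_res dvdn_modself modn_mod. Qed.

Lemma sq_sym p y : (2 * y <= p)%N -> (p - y) * (p - y) = p * (p - 2 * y) + y * y.
Proof. move=> h; have [k ->] : exists k, p = 2*y + k by exists (p - 2*y); rewrite subnKC.
rewrite addKn mul2n -addnn -addnA addKn !mulnDl !mulnDr. lia. Qed.

Lemma card_QR p : prime p -> odd p ->
  #|[set a : 'I_p | (a != 0 :> nat) && quad_res p a]| = p./2.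
Proof.
move=> pp op; have p0 : (0 < p)%N by apply: prime_gt0.
have hp : p = (p./2).*2.+1 by rewrite -[p in LHS]odd_double_half op.
pose sq (x : 'I_(p./2)) : 'I_p := Ordinal (ltn_pmod ((x.+1) * (x.+1)) p0).
have -> : [set a : 'I_p | (a != 0 :> nat) && quad_res p a] = sq @: 'I_(p./2).
  apply/setP => a; rewrite !inE; apply/idP/imsetP.
  - case/andP=> a0 /existsP [x /eqP hx].
    rewrite (modn_small (ltn_ord a)) in hx.
    have x0 : (0 < x)%N.
      case: x hx => [[|x] ?] //= h; by rewrite -h mod0n in a0.
    have [le|gt] := leqP x p./2.
    + have lt : (x.-1 < p./2)%N by (timeout 15 lia).
      exists (Ordinal lt) => //; apply: val_inj => /=.
      by rewrite prednK // hx.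
    + have lt : ((p - x).-1 < p./2)%N by have := ltn_ord x; (timeout 15 lia).
      exists (Ordinal lt) => //; apply: val_inj => /=.
      rewrite prednK; last by have := ltn_ord x; (timeout 15 lia).
      rewrite -hx; have h2 : (2 * (p - x) <= p)%N by have := ltn_ord x; (timeout 15 lia).
      have := sq_sym h2; rewrite subKn; last by have := ltn_ord x; (timeout 15 lia).
      by move=> ->; rewrite [p * _]mulnC modnMDl.
  - case=> x _ -> /=; apply/andP; split.
    + apply/negP => h.
      have : p %| x.+1 * x.+1 by exact: h.
      rewrite Euclid_dvdM // orbb => /dvdn_leq; have := ltn_ord x; (timeout 15 lia).
    + have lt : (x.+1 < p)%N by have := ltn_ord x; (timeout 15 lia).
      apply/existsP; exists (Ordinal lt).
      by rewrite /= modn_mod.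
rewrite card_imset ?card_ord //.
move=> x y /(congr1 val) /= /eqP h; apply: val_inj => /=.
wlog le : x y h / (x <= y)%N.
  move=> Wl; have [xy|yx] := leqP x y; first exact: (Wl x y h xy).
  by apply/esym; apply: (Wl y x _ (ltnW yx)); rewrite eq_sym.
move: h; rewrite eq_sym eqn_mod_dvd; last by apply: leq_mul.
have -> : y.+1 * y.+1 - x.+1 * x.+1 = (y - x) * (y.+1 + x.+1).
  by rewrite (_ : y - x = y.+1 - x.+1) // -subn_sqr !mulnn.
rewrite Euclid_dvdM // => /orP [|/dvdn_leq].
- move=> hd; apply/eqP; rewrite eqn_leq le /= leqNgt; apply/negP => lt.
  have h0 : (0 < y - x)%N by rewrite subn_gt0.
  have := dvdn_leq h0 hd; have := ltn_ord y; (timeout 15 lia).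
- have := ltn_ord y; have := ltn_ord x; (timeout 15 lia).
Qed.

Local Open Scope ring_scope.

Lemma sum_indic (T : finType) (A : {set T}) :
  \sum_(i : T) ((i \in A)%:R : int) = #|A|%:R.
Proof.
rewrite -sumr_const [RHS]big_mkcond /=; apply: eq_bigr => i _; by case: (i \in A).
Qed.

Lemma sum_leg p : prime p -> odd p -> \sum_(i < p) legendre p i = 0.
Proof.
move=> pp op; have p0 : (0 < p)%N by apply: prime_gt0.
set Q := [set a : 'I_p | (a != 0 :> nat) && quad_res p a].
have e : forall i : 'I_p, legendre p i = ((i \in Q)%:R : int) *+ 2 - ((i != 0 :> nat) : nat)%:R.
  move=> i; rewrite /legendre inE.
  have -> : (p %| i)%N = (i == 0 :> nat) by rewrite /dvdn modn_small.
  by case: (i == 0 :> nat); case: (quad_res p i).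
rewrite (eq_bigr _ (fun i _ => e i)) sumrB sumrMnl sum_indic /Q card_QR //.
have -> : \sum_(i < p) (((i != 0 :> nat) : nat)%:R : int) = (p - 1)%:R.
  rewrite -(big_mkord xpredT (fun i => (((i != 0) : nat)%:R : int))).
  rewrite big_ltn //= add0r (eq_big_nat _ _ (F2 := fun _ => 1)); last first.
    by move=> i /andP [h _]; rewrite -lt0n h.
  by rewrite sumr_const_nat.
have hp : p = (p./2).*2.+1 by rewrite -[p in LHS]odd_double_half op.
rewrite [in X in _ - X]hp subn1 /= -mul2n natrM mulr_natl subrr //.
Qed.

Local Open Scope ring_scope.

Definition W p s : int := if (p %| s)%N then 1 else - legendre p s.

Lemma W_mod p s : W p (s %% p) = W p s.
Proof. by rewrite /W dvdn_modself legendre_mod. Qed.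

Lemma W_per p s : W p (s + p)%N = W p s.
Proof. by rewrite -W_mod modnDr W_mod. Qed.

Lemma sumW p : prime p -> odd p -> \sum_(i < p) W p i = 1.
Proof.
move=> pp op; have p0 : (0 < p)%N by apply: prime_gt0.
have e : forall i : 'I_p, W p i = (((i == 0 :> nat) : nat)%:R : int) - legendre p i.
  move=> i; rewrite /W /legendre.
  have -> : (p %| i)%N = (i == 0 :> nat) by rewrite /dvdn modn_small.
  by case: (i == 0 :> nat); rewrite ?subr0 ?sub0r.
rewrite (eq_bigr _ (fun i _ => e i)) sumrB sum_leg // subr0.
rewrite -(big_mkord xpredT (fun i => (((i == 0) : nat)%:R : int))).
rewrite big_ltn //= big1_seq ?addr0 //.
by move=> i /andP [_]; rewrite mem_index_iota => /andP [h _]; rewrite eqn0Ngt h.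
Qed.

Section Per.
Variable (p : nat) (h : nat -> int).
Hypothesis per : forall s, h (s + p)%N = h s.

Lemma per_mod x : h (x %% p)%N = h x.
Proof.
rewrite {2}(divn_eq x p); elim: (x %/ p)%N => [|k IH]; first by rewrite mul0n add0n.
by rewrite mulSn -addnA addnC per.
Qed.

Lemma per_shift k : \sum_(0 <= i < p) h (i + k)%N = \sum_(0 <= i < p) h i.
Proof.
elim: k => [|k IH]; first by apply: eq_bigr => i _; rewrite addn0.
case: p per IH => [|q] per' IH; first by rewrite !big_geq.
rewrite -IH [LHS]big_nat_recr // [RHS]big_nat_recl //= add0n.
rewrite addnS -addSn addnC per' addrC; congr (_ + _).
by apply: eq_bigr => i _; rewrite addnS addSn.
Qed.

Lemma per_block m : \sum_(m <= i < (m + p)%N) h i = \sum_(0 <= i < p) h i.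
Proof.
by rewrite (addnC m p) -{1}[m]add0n big_addn addnK per_shift.
Qed.

Lemma per_double : prime p -> odd p ->
  \sum_(0 <= i < p) h (2 * i)%N = \sum_(0 <= i < p) h i.
Proof.
move=> pp op; have p0 : (0 < p)%N by apply: prime_gt0.
rewrite !big_mkord.
pose g (j : 'I_p) : 'I_p := Ordinal (ltn_pmod (2 * j)%N p0).
rewrite [RHS](reindex_inj (h := g)) /=; first by apply: eq_bigr => i _; rewrite per_mod.
move=> x y /(congr1 val) /= /eqP hxy; apply: val_inj => /=.
wlog le : x y hxy / (x <= y)%N.
  move=> Wl; have [xy|yx] := leqP x y; first exact: (Wl x y hxy xy).
  by apply/esym; apply: (Wl y x _ (ltnW yx)); rewrite eq_sym.
move: hxy; rewrite eq_sym eqn_mod_dvd; last by rewrite leq_mul2l le orbT.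
rewrite -mulnBr Euclid_dvdM // => /orP [/dvdn_leq|].
- move=> H; have p2 : p = 2%N by have := prime_gt1 pp; have := H isT; lia.
  by exfalso; move: op; rewrite p2.
- move=> hd; apply/eqP; rewrite eqn_leq le /= leqNgt; apply/negP => lt.
  have h0 : (0 < y - x)%N by rewrite subn_gt0.
  have := dvdn_leq h0 hd; have := ltn_ord y; lia.
Qed.
End Per.

Local Open Scope ring_scope.

Definition G p m : int := \sum_(0 <= a < m) \sum_(0 <= b < m) W p (a + b + 2)%N
   - \sum_(0 <= a < m) W p (2 * a + 2)%N.

Section Step.
Variable p : nat.
Hypotheses (pp : prime p) (op : odd p).

Lemma sumW' : \sum_(0 <= i < p) W p i = 1.
Proof. by rewrite big_mkord sumW. Qed.

Lemma blockW k m : \sum_(m <= b < (m + p)%N) W p (b + k)%N = 1.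
Proof.
rewrite (@per_block p (fun b => W p (b + k)%N)); last by move=> s /=; rewrite addnAC W_per.
by rewrite per_shift ?sumW' // => s /=; rewrite W_per.
Qed.

Lemma diagW m : \sum_(m <= a < (m + p)%N) W p (2 * a + 2)%N = 1.
Proof.
rewrite (@per_block p (fun a => W p (2 * a + 2)%N)); last first.
  by move=> s /=; rewrite (_ : (2 * (s + p) + 2 = (2*s+2) + p + p)%N) ?W_per //; lia.
rewrite (@per_double p (fun j => W p (j + 2)%N)) //; last by move=> s /=; rewrite addnAC W_per.
by rewrite per_shift ?sumW' // => s /=; rewrite W_per.
Qed.

Lemma G_step m : G p (m + p)%N = G p m + m%:R *+ 2 + p%:R - 1.
Proof.
rewrite /G.
have sp : forall F : nat -> int, \sum_(0 <= a < (m + p)%N) F a =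
    \sum_(0 <= a < m) F a + \sum_(m <= a < (m + p)%N) F a.
  by move=> F; rewrite (@big_cat_nat _ _ _ m) // leq_addr.
rewrite sp diagW.
rewrite (sp (fun a => \sum_(0 <= b < (m + p)%N) W p (a + b + 2)%N)).
have c1 : forall a, \sum_(m <= b < (m + p)%N) W p (a + b + 2)%N = 1.
  by move=> a; rewrite -(blockW (a + 2) m); apply: eq_bigr => b _; rewrite addnAC addnC addnA.
under eq_bigr do rewrite sp c1.
under [X in _ + X - _]eq_bigr do rewrite sp c1.
rewrite !big_split /= [X in _ + (X + _) - _]exchange_big_nat /=.
have c2 : forall a, \sum_(m <= b < (m + p)%N) W p (b + a + 2)%N = 1.
  by move=> a; rewrite -(blockW (a + 2) m); apply: eq_bigr => b _; rewrite addnA.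
under [X in _ + (X + _) - _]eq_bigr do rewrite c2.
rewrite !sumr_const_nat subn0 addKn mulr2n.
move: (\sum_(0 <= i < m) _) (\sum_(0 <= a < m) _) => D E.
move: D E (m%:R : int) (p%:R : int) => D E x y.
ring.
Qed.
End Step.

Local Open Scope ring_scope.

Lemma G_closed p r q : prime p -> odd p ->
  G p (r + q * p)%N = G p r + (r%:R * q%:R) *+ 2 + p%:R * q%:R * q%:R - q%:R.
Proof.
move=> pp op; elim: q => [|q IH].
  by rewrite mul0n addn0 !mulr0 mul0rn addr0 addr0 subr0.
rewrite mulSnr addnA (G_step pp op) IH natrD natrM -(addn1 q) natrD.
move: (r%:R : int) (q%:R : int) (p%:R : int) => a b c.
rewrite !mulr2n; ring.
Qed.

Lemma shiftsum k m (F : nat -> int) :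
  \sum_(k <= s < (m + k)%N) F s = \sum_(0 <= a < m) F (a + k)%N.
Proof. by rewrite -{1}[k]add0n big_addn addnK. Qed.

Definition cc (r s : nat) : int :=
  (if (s < r.+2)%N then s%:Z - 1 else 2 * r%:Z + 1 - s%:Z) - delta s.

Lemma delta_odd s : odd s -> delta s = 0.
Proof. by rewrite /delta => ->. Qed.

Lemma coef_id (g : nat -> int) r :
  \sum_(0 <= a < r) \sum_(0 <= b < r) g (a + b + 2)%N - \sum_(0 <= a < r) g (2 * a + 2)%N
  = \sum_(1 <= s < (2 * r).+2) cc r s * g s.
Proof.
elim: r => [|r IH].
  rewrite muln0 big_nat1 /cc /delta /=.
  by rewrite !big_geq // subrr mul0r.
have e2 : cc r.+1 (2 * r).+2 = 0.
  rewrite /cc /delta; have -> : odd (2 * r).+2 = false by rewrite /= negbK oddM.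
  case: ifP => h; lia.
have e3 : cc r.+1 (2 * r).+3 = 0.
  rewrite /cc delta_odd /=; last by rewrite negbK oddM.
  have -> : ((2 * r).+3 < r.+3)%N = false by lia.
  lia.
have -> : (2 * r.+1).+2 = (2 * r).+4 by lia.
rewrite [RHS]big_nat_recr // [in RHS]big_nat_recr //= e2 e3 !mul0r !addr0.
have -> : \sum_(0 <= a < r.+1) \sum_(0 <= b < r.+1) g (a + b + 2)%N
   - \sum_(0 <= a < r.+1) g (2 * a + 2)%N =
   (\sum_(0 <= a < r) \sum_(0 <= b < r) g (a + b + 2)%N
   - \sum_(0 <= a < r) g (2 * a + 2)%N) + (\sum_(0 <= a < r) g (a + r.+2)%N) *+ 2.
  rewrite big_nat_recr //= [X in _ - X]big_nat_recr //=.
  under eq_bigr do rewrite big_nat_recr //=.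
  rewrite big_nat_recr //= big_split /=.
  have e4 : forall F : nat -> nat, (forall i, F i = (i + r.+2)%N) -> 
     \sum_(0 <= i < r) g (F i) = \sum_(0 <= a < r) g (a + r.+2)%N.
    by move=> F hF; apply: eq_bigr => i _; rewrite hF.
  rewrite e4; last by move=> i; lia.
  rewrite e4; last by move=> i; lia.
  rewrite (_ : (r + r + 2 = 2 * r + 2)%N); last by lia.
  rewrite mulr2n.
  move: (\sum_(0 <= a < r) g (a + r.+2)%N) => X.
  move: (\sum_(0 <= i < r) \sum_(0 <= b < r) g (i + b + 2)%N) => Y.
  move: (\sum_(0 <= i < r) g (2 * i + 2)%N) => Z.
  move: (g (2 * r + 2)%N) => V.
  ring.
rewrite IH.
have hc : forall s, (1 <= s < (2 * r).+2)%N ->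
    cc r.+1 s * g s = cc r s * g s + (((r.+2 <= s)%N : nat)%:R * g s) *+ 2.
  move=> s /andP [h1 h2]; rewrite /cc -mulrnAl -mulrDl; congr (_ * _).
  case: (ltnP s r.+2) => h3; case: (ltnP s r.+3) => h4 /=; rewrite mulr2n; lia.
rewrite (eq_big_nat _ _ hc) big_split /= sumrMnl.
congr (_ + _ *+ 2).
symmetry; rewrite (@big_cat_nat _ _ _ r.+2) //=; [ | lia].
rewrite big1_seq ?add0r; last first.
  by move=> i /andP [_]; rewrite mem_index_iota => /andP [_ h]; rewrite leqNgt h mul0r.
rewrite (_ : (2 * r).+2 = r + r.+2)%N; last by lia.
rewrite shiftsum; apply: eq_bigr => i _; rewrite leq_addl mul1r //.
Qed.

Local Open Scope ring_scope.

Lemma sum_single m n (F : nat -> int) p :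
  \sum_(m <= s < n) F s * ((s == p) : nat)%:R = if (m <= p < n)%N then F p else 0.
Proof.
case: ifP => hp.
  rewrite (bigD1_seq p) ?mem_index_iota ?iota_uniq //= eqxx mulr1 big1_seq ?addr0 //.
  by move=> i /andP [/negbTE -> _]; rewrite mulr0.
rewrite big1_seq // => i /andP [_]; rewrite mem_index_iota => hi.
have -> : (i == p) = false by apply/negbTE; apply: contraFN hp => /eqP <-.
by rewrite mulr0.
Qed.

Lemma base p r : prime p -> odd p -> (r < p)%N ->
  G p r = Num.max 0 (2 * r%:Z - p%:Z + 1) -
   (\sum_(2 <= s < r.+2 | s != p) ((s%:Z - 1 - delta s) * legendre p s) +
    \sum_(r.+2 <= s < (2 * r).+1 | s != p) ((2 * r%:Z - s%:Z + 1 - delta s) * legendre p s)).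
Proof.
move=> pp op rp.
pose gl s : int := if s == p then 0 else legendre p s.
have hW : forall s, (1 <= s < (2 * r).+2)%N ->
    cc r s * W p s = cc r s * ((s == p) : nat)%:R - cc r s * gl s.
  move=> s /andP [h1 h2]; rewrite -mulrBr /gl /W; congr (_ * _).
  case: eqP => [->|ne]; first by rewrite dvdnn subr0.
  have -> : (p %| s)%N = false.
    apply/negP => /dvdnP [k hk]; apply: ne; rewrite hk.
    move: hk h1 h2; case: k => [|[|k]] //=; [lia | by rewrite mul1n | lia].
  by rewrite sub0r.
rewrite /G coef_id (eq_big_nat _ _ hW) sumrB sum_single.
congr (_ - _).
- rewrite /cc delta_odd // subr0.
  case: ifP => h1; [case: ifP => h2|].
  + lia.
  + lia.
  + lia.
- case: r rp hW => [|r'] rp hW.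
    rewrite muln0 big_nat1 !big_geq // /cc /= /delta /=.
    by rewrite subr0 subrr mul0r.
  set r := r'.+1.
  rewrite big_ltn; last by rewrite /r; lia.
  have -> : cc r 1 = 0 by rewrite /cc /delta /= subrr.
  rewrite mul0r add0r (@big_cat_nat _ _ _ r.+2); [ | lia | rewrite /r; lia].
  rewrite [X in _ + X = _]big_nat_recr; last by rewrite /r; lia.
  have -> : cc r (2 * r).+1 = 0.
    rewrite /cc delta_odd; last by rewrite -[(2 * r).+1]addn1 oddD oddM.
    have -> : ((2 * r).+1 < r.+2)%N = false by rewrite /r; lia.
    lia.
  rewrite mul0r /= addr0 [X in _ = X + _]big_mkcond [X in _ = _ + X]big_mkcond /=; congr (_ + _); apply: eq_big_nat => s /andP [h1 h2].
  + rewrite /cc ifT // /gl; case: eqP => _ /=; rewrite ?mulr0 //; congr (_ * _); lia.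
  + rewrite /cc ifF; last by apply/negbTE; rewrite -leqNgt.
    rewrite /gl; case: eqP => _ /=; rewrite ?mulr0 //; congr (_ * _); lia.
Qed.

Local Open Scope ring_scope.

Lemma sum_cond_card (T : finType) (E : {set T}) (P : pred T) :
  \sum_(e in E) ((P e : nat)%:R : int) = #|[set e in E | P e]|%:R.
Proof.
rewrite -sum_indic [LHS]big_mkcond /=; apply: eq_bigr => i _; rewrite !inE.
by case: (i \in E); case: (P i).
Qed.

Lemma diff_edges p n (f : 'I_n -> nat) :
  (num_edges_label p f 0)%:R - (num_edges_label p f 1)%:R =
  \sum_(e in Kn_edges n) W p (\sum_(v in e) f v)%N :> int.
Proof.
rewrite /num_edges_label -!sum_cond_card -sumrB; apply: eq_bigr => e _.
rewrite /edge_label /W /legendre.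
case: (p %| _)%N => //.
by case: (quad_res _ _).
Qed.

Lemma card_pairs n (e : {set 'I_n}) : e \in Kn_edges n ->
  #|[set x : 'I_n * 'I_n | (x.1 != x.2) && ([set x.1; x.2] == e)]| = 2%N.
Proof.
rewrite inE => /cards2P [a [b [ab ->]]].
have -> : [set x : 'I_n * 'I_n | (x.1 != x.2) && ([set x.1; x.2] == [set a; b])]
    = [set (a, b); (b, a)].
  apply/setP => [[x y]]; rewrite !inE /=; apply/idP/idP.
  - case/andP => xy /eqP hs.
    have hx : x \in [set a; b] by rewrite -hs !inE ?eqxx.
    have hy : y \in [set a; b] by rewrite -hs !inE ?eqxx ?orbT.
    move: hx hy xy; rewrite !inE => /orP [] /eqP -> /orP [] /eqP -> xy;
      rewrite ?eqxx ?orbT //; by move: xy; rewrite eqxx.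
  - case/orP => /eqP [-> ->]; rewrite ?ab //= eq_sym ab /=.
    by rewrite setUC.
rewrite cards2; case: eqP => // [[h _]]; by move: ab; rewrite h eqxx.
Qed.

Lemma edges_pairs p n (f : 'I_n -> nat) :
  (\sum_(e in Kn_edges n) W p (\sum_(v in e) f v)%N) *+ 2 =
  \sum_(x : 'I_n * 'I_n | x.1 != x.2) W p (f x.1 + f x.2)%N.
Proof.
have h2 : forall x : 'I_n * 'I_n, x.1 != x.2 ->
    W p (f x.1 + f x.2)%N = W p (\sum_(v in [set x.1; x.2]) f v)%N.
  by move=> [a b] /= ab; rewrite big_setU1 ?big_set1 //= inE.
rewrite [RHS](eq_bigr _ h2).
rewrite (partition_big (fun x : 'I_n * 'I_n => [set x.1; x.2]) (mem (Kn_edges n))); last first.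
  by move=> [a b] /= ab; rewrite inE cards2 ab.
rewrite -sumrMnl; apply: eq_bigr => e he.
rewrite (eq_bigr (fun _ => W p (\sum_(v in e) f v)%N)); last by move=> x /andP [_ /eqP ->].
rewrite -(card_pairs he) -sumr_const; apply: eq_bigl => x; by rewrite inE.
Qed.

Local Open Scope ring_scope.

Lemma pairs_G p n (f : 'I_n -> nat) : injective f -> (forall v, (1 <= f v <= n)%N) ->
  \sum_(x : 'I_n * 'I_n | x.1 != x.2) W p (f x.1 + f x.2)%N = G p n.
Proof.
move=> finj fr.
have hlt : forall u, (f u - 1 < n)%N by move=> u; have := fr u; lia.
pose g u : 'I_n := Ordinal (hlt u).
have hf : forall u, f u = (g u).+1 by move=> u /=; have := fr u; lia.
have ginj : injective g.
  by move=> u v /(congr1 val) /= e; apply: finj; rewrite (hf u) (hf v) /= e.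
have R : forall K : 'I_n -> int, \sum_u K (g u) = \sum_a K a.
  by move=> K; rewrite [RHS](reindex_inj ginj).
rewrite -[LHS]/(\sum_(x : 'I_n * 'I_n | true && (x.1 != x.2)) W p (f x.1 + f x.2)%N).
rewrite -(pair_big_dep xpredT (fun u v => u != v) (fun u v => W p (f u + f v)%N)) /=.
have e1 : forall u, \sum_(v | u != v) W p (f u + f v)%N =
    \sum_v W p (f u + f v)%N - W p (f u + f u)%N.
  move=> u; rewrite [X in _ = X - _](bigD1 u) //= addrC addrK.
  by apply: eq_bigl => v; rewrite eq_sym.
rewrite (eq_bigr _ (fun u _ => e1 u)) sumrB.
rewrite /G !big_mkord.
congr (_ - _).
- have inner : forall u, \sum_v W p (f u + f v)%N = \sum_(b < n) W p ((g u).+1 + b.+1)%N.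
    move=> u; rewrite -(R (fun b => W p ((g u).+1 + b.+1)%N)).
    by apply: eq_bigr => v _; rewrite !hf.
  rewrite (eq_bigr _ (fun u _ => inner u)).
  rewrite (R (fun a => \sum_(b < n) W p (a.+1 + b.+1)%N)).
  apply: eq_bigr => a _; rewrite big_mkord; apply: eq_bigr => b _; congr (W p _); lia.
- rewrite (eq_bigr (fun u => W p ((g u).+1 + (g u).+1)%N)); last by move=> u _; rewrite !hf.
  rewrite (R (fun u => W p (u.+1 + u.+1)%N)).
  apply: eq_bigr => a _; congr (W p _); lia.
Qed.

Unset Implicit Arguments.
Theorem mainTheorem5 (p n : nat) (f : 'I_n -> nat) :
  prime p -> odd p -> (1 <= n)%N ->
  injective f -> (forall v, (1 <= f v <= n)%N) ->
  let q := (n %/ p)%N in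
  let r := (n - q * p)%N in
  let psi : int := Num.max 0 (2 * r%:Z - p%:Z + 1) in
  let S1 : int := \sum_(2 <= s < r.+2 | s != p)
                    ((s%:Z - 1 - delta s) * legendre p s) in
  let S2 : int := \sum_(r.+2 <= s < (2 * r).+1 | s != p)
                    ((2 * r%:Z - s%:Z + 1 - delta s) * legendre p s) in
  let S := S1 + S2 in
  (num_edges_label p f 0)%:R - (num_edges_label p f 1)%:R
    = (1 / 2 : rat) * (2 * n%:Z * q%:Z - p%:Z * q%:Z ^+ 2 - q%:Z + psi)%:~R
      - (1 / 2 : rat) * S%:~R.
Proof.
move=> pp op n1 finj fr q r psi S1 S2 S.
have hr : r = (n %% p)%N by rewrite /r /q {1}(divn_eq n p) addKn.
have rp : (r < p)%N by rewrite hr ltn_pmod // prime_gt0.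
have hn : n = (r + q * p)%N by rewrite /r subnK // /q leq_trunc_div.
have key : ((num_edges_label p f 0)%:R - (num_edges_label p f 1)%:R : int) *+ 2 =
    (2 * n%:Z * q%:Z - p%:Z * q%:Z ^+ 2 - q%:Z + psi) - S.
  rewrite diff_edges edges_pairs pairs_G // {1}hn G_closed // base //.
  rewrite -/S1 -/S2 -/S -/psi hn.
  rewrite (_ : ((r + q * p)%N%:Z) = r%:Z + q%:Z * p%:Z) //.
  rewrite !natz.
  move: psi S (r%:Z) (q%:Z) (p%:Z) => a b c d e.
  rewrite !mulr2n; ring.
have := congr1 (fun z : int => (z%:~R : rat)) key => /=.
rewrite rmorphMn rmorphB /= !rmorph_nat intrB.
move: ((2 * n%:Z * q%:Z - p%:Z * q%:Z ^+ 2 - q%:Z + psi)%:~R : rat) (S%:~R : rat) => X Y.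
move: ((num_edges_label p f 0)%:R : rat) ((num_edges_label p f 1)%:R : rat) => u v.
rewrite mulr2n => h; lra.
Qed.
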